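(* Let $N\ge 5$ be odd. Let $G_{N,2}$ be the graph with vertex set $\mathbb Z_N$ in which two distinct vertices $x,y$ are adjacent iff $y-x\not\equiv\pm2\pmod N$. Put $\Delta=\sqrt{N(N-4)}$, $\rho=\frac{N-2+\Delta}{2}$. Then $G_{N,2}$ is $(N-3)$-regular with $\frac{N(N-3)}{2}$ edges, and for $u,v\in\mathbb Z_N$, with $q\equiv v-u\pmod N$, $s\equiv 2^{-1}\pmod N$, $\delta_2(q)=\min\{sq\bmod N,\;N-(sq\bmod N)\}$, the expected hitting time of $v$ by the simple random walk on $G_{N,2}$ started at $u$ satisfies $H^{(2)}(u,v)=\frac{N(N-3)}{2}R^{(2)}(u,v)$, where $R^{(2)}$ is effective resistance in $G_{N,2}$, and explicitly \[ H^{(2)}(u,v)=\frac{N(N-3)}{\Delta(\rho^N+1)}\left\{\rho^N-1+(-1)^{\delta_2(q)}\left(\rho^{\delta_2(q)}-\rho^{N-\delta_2(q)}\right)\right\}. \]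
   Context: The simple random walk moves to a uniformly random neighbour at each step; effective resistance uses unit conductance on every edge. *)

(* Defs.v *)
From HB Require Import structures.
From mathcomp Require Import all_boot all_order all_algebra.
From mathcomp Require Import all_classical all_reals all_analysis.
Set Implicit Arguments. Unset Strict Implicit. Unset Printing Implicit Defensive.
Import Order.TTheory GRing.Theory Num.Theory.
Import numFieldNormedType.Exports.
Local Open Scope ring_scope.

Definition adjG (N : nat) (x y : 'I_N) : bool :=
  [&& x != y, ((y + N - x) %% N != 2)%N & ((y + N - x) %% N != N - 2)%N].

Definition degG (N : nat) (x : 'I_N) : nat := #|[set y | adjG x y]|.

Definition edgesG (N : nat) : {set {set 'I_N}} :=
  [set [set x; y] | x in 'I_N, y in 'I_N & adjG x y].

Section Walk.
Variables (R : realType) (N : nat).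

Definition transG : 'M[R]_N :=
  \matrix_(x, y) (if adjG x y then (degG x)%:R^-1 else 0).

Definition avoid (v : 'I_N) : 'M[R]_N :=
  \matrix_(x, y) (if (x == y) && (x != v) then 1 else 0).

(* P_u(T_v > t), T_v = min {t >= 0 : X_t = v} *)
Definition survival (u v : 'I_N) (t : nat) : R :=
  \sum_(y < N) (avoid v *m (transG *m avoid v) ^+ t) u y.

(* expected hitting time E_u[T_v] = sum_{t >= 0} P_u(T_v > t) *)
Definition hitting_time (u v : 'I_N) : R :=
  limn (series (survival u v)).

Definition laplacianG : 'M[R]_N :=
  \matrix_(x, y) ((if x == y then (degG x)%:R else 0) - (adjG x y)%:R).

Definition unitv (x : 'I_N) : 'rV[R]_N := \row_y (if y == x then 1 else 0).

(* effective resistance: b L^- b^T with b = e_u - e_v and L^- a generalized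
   inverse (pinvmx) of the Laplacian *)
Definition eff_resistance (u v : 'I_N) : R :=
  let b := unitv u - unitv v in (b *m pinvmx laplacianG *m b^T) 0 0.

End Walk.

(* Main.v *)
From HB Require Import structures.
From mathcomp Require Import all_boot all_order all_algebra.
From mathcomp Require Import all_classical all_reals all_analysis.
From mathcomp Require Import zify ring lra.
Require Import Defs.
Import Order.TTheory GRing.Theory Num.Theory.
Import numFieldNormedType.Exports.
Local Open Scope ring_scope.

Section Comb.
Variable n : nat.
Local Notation N := n.+2.
Hypothesis hN5 : (5 <= N)%N.

Lemma valZ (x y : 'I_N) : ((y + N - x) %% N)%N = val (y - x).
Proof.
rewrite /= modnDmr addnBA //; exact: ltnW.
Qed.

Lemma valnat (k : nat) : (k < N)%N -> val (k%:R : 'I_N) = k.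
Proof. by move=> hk; rewrite Zp_nat /= modn_small. Qed.

Lemma valN2 : val (- 2%:R : 'I_N) = (N - 2)%N.
Proof.
have -> : val (- 2%:R : 'I_N) = ((N - val (2%:R : 'I_N)) %% N)%N by [].
rewrite valnat; last by apply: leq_trans hN5.
rewrite modn_small //; lia.
Qed.

Lemma adjE (x y : 'I_N) :
  adjG x y = [&& y != x, y != x + 2%:R & y != x - 2%:R].
Proof.
rewrite /adjG valZ eq_sym.
have e1 : (val (y - x) == 2%N) = (y == x + 2%:R).
  have v2 : val (2%:R : 'I_N) = 2%N by rewrite valnat //; apply: leq_trans hN5.
  by rewrite -{1}v2 val_eqE subr_eq addrC.
have e2 : (val (y - x) == (N - 2)%N) = (y == x - 2%:R).
  by rewrite -valN2 val_eqE subr_eq addrC.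
by rewrite e1 e2.
Qed.

Lemma two_neq0 : (2%:R : 'I_N) != 0.
Proof.
apply/eqP => /(congr1 val); rewrite valnat //; apply: leq_trans hN5 => //.
Qed.

Lemma four_neq0 : (4%:R : 'I_N) != 0.
Proof.
apply/eqP => /(congr1 val); rewrite valnat //.
Qed.

Lemma adj_sym (x y : 'I_N) : adjG x y = adjG y x.
Proof.
have e1 : (y == x + 2%:R) = (x == y - 2%:R) by rewrite [RHS]eq_sym subr_eq.
have e2 : (y == x - 2%:R) = (x == y + 2%:R) by rewrite eq_sym subr_eq.
rewrite !adjE e1 e2 (eq_sym y x).
by case: (x == y - 2%:R); case: (x == y + 2%:R).
Qed.

Lemma adj_set (x : 'I_N) :
  [set y | adjG x y] = ~: [set x; x + 2%:R; x - 2%:R].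
Proof.
apply/setP => y; rewrite !inE adjE.
by case: (y == x); case: (y == x + 2%:R); case: (y == x - 2%:R).
Qed.

Lemma deg_eq (x : 'I_N) : degG x = (N - 3)%N.
Proof.
rewrite /degG adj_set.
have hc := cardsC [set x; x + 2%:R; x - 2%:R].
rewrite card_ord in hc.
have h3 : #|[set x; x + 2%:R; x - 2%:R]| = 3%N.
  rewrite -finset.setUA cardsU1 cards2 !inE.
  have a1 : (x == x + 2%:R) = false.
    apply/negbTE; rewrite eq_sym -subr_eq0.
    have -> : x + 2%:R - x = 2%:R by ring.
    exact: two_neq0.
  have a2 : (x == x - 2%:R) = false.
    apply/negbTE; rewrite eq_sym -subr_eq0.
    have -> : x - 2%:R - x = - 2%:R by ring.
    rewrite oppr_eq0; exact: two_neq0.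
  have a3 : (x + 2%:R != x - 2%:R).
    rewrite -subr_eq0.
    have -> : x + 2%:R - (x - 2%:R) = 4%:R by ring.
    exact: four_neq0.
  by rewrite a1 a2 a3.
rewrite h3 in hc; lia.
Qed.


Definition LtP : {set 'I_N * 'I_N} :=
  [set p | adjG p.1 p.2 && (val p.1 < val p.2)%N].

Lemma edges_imset :
  edgesG N = [set [set p.1; p.2] | p in LtP].
Proof.
apply/setP => e; apply/imset2P/imsetP.
- case=> x y _; rewrite !inE /= => hxy ->.
  have hne : x != y by move: hxy; rewrite adjE eq_sym => /andP[].
  case: (ltngtP (val x) (val y)) => h.
  + by exists (x, y) => //; rewrite inE /= hxy h.
  + exists (y, x) => /=; first by rewrite inE /= -adj_sym hxy h.
    by rewrite finset.setUC.
  + by move: hne; rewrite -val_eqE h eqxx.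
- case=> [[x y]]; rewrite inE /= => /andP[hxy _] ->.
  by exists x y => //; rewrite inE /= hxy.
Qed.

Lemma LtP_inj : {in LtP &, injective (fun p : 'I_N * 'I_N => [set p.1; p.2])}.
Proof.
move=> [a b] [c d]; rewrite !inE /= => /andP[_ hab] /andP[_ hcd] E.
have ha : a \in [set c; d] by rewrite -E set21.
have hb : b \in [set c; d] by rewrite -E set22.
have hc : c \in [set a; b] by rewrite E set21.
case/set2P: ha => ha; case/set2P: hb => hb; case/set2P: hc => hc; subst;
  try done; exfalso; lia.
Qed.

Lemma card_pairs :
  #|[set p : 'I_N * 'I_N | adjG p.1 p.2]| = (N * (N - 3))%N.
Proof.
have -> : (N * (N - 3))%N = (\sum_(x : 'I_N) degG x)%N.
  by rewrite (eq_bigr (fun _ => (N - 3)%N)) ?sum_nat_const ?card_ord // => x _; rewrite deg_eq.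
rewrite /degG.
under eq_bigr => x _ do rewrite -sum1_card.
rewrite pair_big_dep /= -sum1_card.
by apply: eq_bigl => p; rewrite !inE.
Qed.

Lemma card_edges : #|edgesG N| = ((N * (N - 3)) %/ 2)%N.
Proof.
rewrite edges_imset (card_in_imset LtP_inj).
set B := [set p : 'I_N * 'I_N | (val p.1 < val p.2)%N].
have h := cardsID B [set p : 'I_N * 'I_N | adjG p.1 p.2].
have e1 : [set p : 'I_N * 'I_N | adjG p.1 p.2] :&: B = LtP.
  by apply/setP => p; rewrite !inE.
have e2 : [set p : 'I_N * 'I_N | adjG p.1 p.2] :\: B =
    [set (p.2, p.1) | p in LtP].
  apply/setP => [[x y]]; rewrite !inE /=; apply/idP/imsetP.
  - move=> /andP[hlt hxy].
    have hne : x != y by move: hxy; rewrite adjE eq_sym => /andP[].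
    exists (y, x) => //; rewrite inE /= -adj_sym hxy /=.
    move: hne hlt; rewrite -val_eqE /=; lia.
  - case=> [[a b]]; rewrite inE /= => /andP[hab hl] [-> ->].
    by rewrite -adj_sym hab -leqNgt ltnW.
have inj : injective (fun p : 'I_N * 'I_N => (p.2, p.1)).
  by move=> [a b] [c d] /= [-> ->].
rewrite e1 e2 (card_imset _ inj) card_pairs in h.
rewrite -h addnn -mul2n mulKn //.
Qed.

End Comb.

Section Alg.
Variable R : rcfType.
Variable n : nat.
Local Notation N := n.+2.
Hypothesis hN5 : (5 <= N)%N.
Hypothesis hodd : odd N.

Let m : R := N%:R.
Definition Dl : R := Num.sqrt (N%:R * (N%:R - 4)).
Definition rh : R := (N%:R - 2 + Dl) / 2.
Definition Ac : R := (N * (N - 3))%:R / (Dl * (rh ^+ N + 1)).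
Definition G (k : nat) : R :=
  Ac * (rh ^+ N - 1 + (-1) ^+ k * (rh ^+ k - rh ^+ (N - k))).

Lemma m5 : 5 <= m.
Proof. by rewrite /m (ler_nat R 5 N). Qed.

Lemma Dl2 : Dl ^+ 2 = m * (m - 4).
Proof.
rewrite /Dl sqr_sqrtr //; have := m5; rewrite -/m => h.
apply: mulr_ge0; lra.
Qed.

Lemma Dl_pos : 0 < Dl.
Proof.
rewrite /Dl sqrtr_gt0; have := m5; rewrite -/m => h.
apply: mulr_gt0; lra.
Qed.

Lemma rh_eq : rh ^+ 2 = (m - 2) * rh - 1.
Proof.
have h := Dl2.
have -> : rh ^+ 2 = ((m - 2) ^+ 2 + 2 * (m - 2) * Dl + Dl ^+ 2) / 4.
  by rewrite /rh /m; field.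
rewrite h /rh /m; by field.
Qed.

Lemma rh_ge1 : 1 <= rh.
Proof.
have h := m5; have d := Dl_pos; rewrite /rh -/m; lra.
Qed.

Lemma rh_gt0 : 0 < rh.
Proof. have := rh_ge1; lra. Qed.

Lemma key2 : m * (rh - 1) = Dl * (rh + 1).
Proof.
have h := Dl2.
have -> : m * (rh - 1) = (m * (m - 4) + m * Dl) / 2 by rewrite /rh /m; field.
by rewrite -h /rh /m; field.
Qed.

Lemma Ac_eq : Ac = m * (m - 3) / (Dl * (rh ^+ N + 1)).
Proof. by rewrite /Ac natrM natrB //; apply: leq_trans hN5. Qed.

Lemma Ac_ge0 : 0 <= Ac.
Proof.
rewrite Ac_eq; have h := m5; have d := Dl_pos.
have r : 0 < rh ^+ N + 1 by have := exprn_ege1 N rh_ge1; lra.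
apply: divr_ge0; first by apply: mulr_ge0; lra.
by apply: mulr_ge0; lra.
Qed.

Lemma sgN : (-1) ^+ N = -1 :> R.
Proof. by rewrite -signr_odd hodd expr1. Qed.

Lemma G0 : G 0 = 0.
Proof. by rewrite /G expr0 subn0 mul1r; ring. Qed.

Lemma GN : G N = 0.
Proof. by rewrite /G subnn sgN expr0; ring. Qed.

Lemma Gsym k : (k <= N)%N -> G (N - k) = G k.
Proof.
move=> hk; rewrite /G subKn //.
have -> : (-1) ^+ (N - k) = - (-1) ^+ k :> R.
  by rewrite -signr_odd oddB // hodd -[in RHS]signr_odd; case: (odd k); rewrite /= ?expr0 ?expr1 ?opprK.
ring.
Qed.

Lemma Gnonneg k : (k <= N)%N -> 0 <= G k.
Proof.
move=> hk; rewrite /G; apply: mulr_ge0; first exact: Ac_ge0.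
have h1 := exprn_ege1 k rh_ge1.
have h2 := exprn_ege1 (N - k) rh_ge1.
have h3 : rh ^+ k <= rh ^+ N by apply: ler_weXn2l; [exact: rh_ge1 | exact: hk].
have h4 : rh ^+ (N - k) <= rh ^+ N by apply: ler_weXn2l; [exact: rh_ge1 | exact: leq_subr].
rewrite -signr_odd; case: (odd k); rewrite /= ?expr0 ?expr1; lra.
Qed.

Lemma Grec j : (j.+2 <= N)%N ->
  G j + G j.+2 + (m - 2) * G j.+1 = Ac * m * (rh ^+ N - 1).
Proof.
move=> hj; rewrite /G.
set r := (N - j.+2)%N.
have e1 : (N - j = r.+2)%N by rewrite /r; lia.
have e2 : (N - j.+1 = r.+1)%N by rewrite /r; lia.
rewrite e1 e2 !exprS.
have E := rh_eq; rewrite expr2 in E.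
have -> : rh * (rh * rh ^+ j) = (rh * rh) * rh ^+ j by ring.
have -> : rh * (rh * rh ^+ r) = (rh * rh) * rh ^+ r by ring.
rewrite E; ring.
Qed.

Lemma geo : (1 + rh) * \sum_(k < N) (- rh) ^+ k = 1 + rh ^+ N.
Proof.
have h := subrX1 (- rh) N.
rewrite exprNn sgN in h.
have -> : 1 + rh = - (- rh - 1) by ring.
rewrite mulNr -h; ring.
Qed.

Lemma Gsum : \sum_(k < N) G k = Ac * m * (rh ^+ N - 1) - (m - 3).
Proof.
set T := \sum_(k < N) (- rh) ^+ k.
have s2 : \sum_(k < N) (-1) ^+ k * rh ^+ (N - k) = rh * T.
  rewrite /T big_distrr /= (reindex_inj rev_ord_inj) /=.
  apply: eq_bigr => k _.
  have -> : (N - (N - k.+1) = k.+1)%N by have := ltn_ord k; lia.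
  have -> : (-1) ^+ (N - k.+1) = (-1) ^+ k :> R.
    rewrite -signr_odd oddB ?hodd //= -[in RHS]signr_odd.
    by case: (odd k).
  by rewrite [(- rh) ^+ _]exprNn exprS; ring.
have s1 : \sum_(k < N) G k =
   Ac * (m * (rh ^+ N - 1) + T - \sum_(k < N) (-1) ^+ k * rh ^+ (N - k)).
  rewrite /G -big_distrr /=; congr (_ * _).
  rewrite !big_split /= sumrN sumr_const card_ord -/m.
  rewrite /T; under [X in _ = _ + X - _]eq_bigr => k _ do rewrite exprNn.
  rewrite -sumrN; under eq_bigr => k _ do rewrite mulrBr.
  rewrite big_split /= sumrN.
  rewrite sumr_const card_ord sumrN -[rh ^+ N *+ N]mulr_natr -/m.
  ring.
rewrite s1 s2.
have g := geo; rewrite -/T in g.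
have T_eq : T = (1 + rh ^+ N) / (1 + rh).
  have r : 1 + rh != 0 by have := rh_gt0; lra.
  by rewrite -g; field.
have k2 := key2.
have d := Dl_pos.
have r1 : 1 + rh != 0 by have := rh_gt0; lra.
have r2 : rh ^+ N + 1 != 0 by have := exprn_ege1 N rh_ge1; lra.
have dn : Dl != 0 by lra.
suff : Ac * (T - rh * T) = - (m - 3).
  move=> H; transitivity (Ac * m * (rh ^+ N - 1) + Ac * (T - rh * T)); [ring | by rewrite H].
rewrite Ac_eq T_eq.
have -> : m * (m - 3) / (Dl * (rh ^+ N + 1)) * ((1 + rh ^+ N) / (1 + rh) - rh * ((1 + rh ^+ N) / (1 + rh)))
   = - (m * (rh - 1)) * (m - 3) / (Dl * (1 + rh)).
  by field; rewrite r1 r2 dn.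
rewrite k2; field; by rewrite dn r1.
Qed.

End Alg.

Section Harm.
Variable R : rcfType.
Variable n : nat.
Local Notation N := n.+2.
Hypothesis hN5 : (5 <= N)%N.
Hypothesis hodd : odd N.
Variable s : nat.
Hypothesis hs : ((2 * s) %% N = 1)%N.

Definition sZ : 'I_N := s%:R.

Lemma val1 : val (1 : 'I_N) = 1%N.
Proof. by rewrite -[1 in LHS]/(1%:R) valnat //; apply: leq_trans hN5. Qed.

Lemma s2 : 2%:R * sZ = 1.
Proof.
apply: val_inj; rewrite val1 /sZ -natrM Zp_nat /=.
by rewrite hs.
Qed.

Definition kk (w x : 'I_N) : 'I_N := sZ * (w - x).

Lemma kk_inj w : injective (kk w).
Proof.
move=> x y; rewrite /kk => /(congr1 (fun z => 2%:R * z)).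
rewrite !mulrA s2 !mul1r => /addrI /oppr_inj //.
Qed.

Lemma kk_eq0 w x : (kk w x == 0) = (x == w).
Proof.
apply/idP/idP => [/eqP h|/eqP ->]; last by rewrite /kk subrr mulr0.
have : kk w x = kk w w by rewrite h /kk subrr mulr0.
by move/kk_inj => ->.
Qed.

Lemma kk_p2 w x : kk w (x + 2%:R) = kk w x - 1.
Proof.
rewrite /kk.
have -> : sZ * (w - (x + 2%:R)) = sZ * (w - x) - 2%:R * sZ by ring.
by rewrite s2.
Qed.

Lemma kk_m2 w x : kk w (x - 2%:R) = kk w x + 1.
Proof.
rewrite /kk.
have -> : sZ * (w - (x - 2%:R)) = sZ * (w - x) + 2%:R * sZ by ring.
by rewrite s2.
Qed.

Lemma vadd1 (a : 'I_N) : val (a + 1%R) = ((val a).+1 %% N)%N.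
Proof.
have -> : val (a + 1%R) = ((val a + val (1%R : 'I_N)) %% N)%N by [].
by rewrite val1 addn1.
Qed.

Lemma vsub1 (a : 'I_N) : a != 0 -> val (a - 1%R) = (val a).-1.
Proof.
move=> ha; set b := a - 1%R.
have e : a = b + 1%R by rewrite /b subrK.
have hb : (val b < N)%N := ltn_ord b.
have := vadd1 b; rewrite -e.
have [hlt|hge] := ltnP (val b).+1 N.
- by rewrite modn_small // => ->.
- have eN : (val b).+1 = N by lia.
  rewrite eN modnn => h0.
  by move: ha; rewrite -val_eqE h0.
Qed.

Definition hf (w x : 'I_N) : R := G R n (val (kk w x)).

Lemma hf_w w : hf w w = 0.
Proof. by rewrite /hf /kk subrr mulr0 /= G0. Qed.

Lemma harm w x : x != w ->
  \sum_y (adjG x y)%:R * hf w y = (N%:R - 3) * (hf w x - 1).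
Proof.
move=> hxw.
have n1 : x + 2%:R != x.
  rewrite -subr_eq0; have -> : x + 2%:R - x = 2%:R by ring.
  exact: two_neq0.
have n2 : x - 2%:R != x.
  rewrite -subr_eq0; have -> : x - 2%:R - x = - 2%:R by ring.
  by rewrite oppr_eq0; exact: two_neq0.
have n3 : x - 2%:R != x + 2%:R.
  rewrite -subr_eq0; have -> : x - 2%:R - (x + 2%:R) = - 4%:R by ring.
  by rewrite oppr_eq0; exact: four_neq0.
have S : hf w x + (hf w (x + 2%:R) + (hf w (x - 2%:R) + \sum_(y | adjG x y) hf w y))
    = Ac R n * N%:R * (rh R n ^+ N - 1) - (N%:R - 3).
  rewrite -(@Gsum R n hN5 hodd) [RHS](reindex_inj (kk_inj w)).
  rewrite [RHS](bigD1 x) // [X in _ = _ + X](bigD1 (x + 2%:R)); last by rewrite /= n1.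
  rewrite [X in _ = _ + (_ + X)](bigD1 (x - 2%:R)); last by rewrite /= n2 n3.
  congr (_ + (_ + (_ + _))).
  by apply: eq_bigl => y; rewrite adjE //= andbA.
have hk : kk w x != 0 by rewrite kk_eq0.
have e2 : hf w (x + 2%:R) = G R n (val (kk w x)).-1 by rewrite /hf kk_p2 vsub1.
have e3 : hf w (x - 2%:R) = G R n ((val (kk w x)).+1 %% N)%N by rewrite /hf kk_m2 vadd1.
have hlt : (val (kk w x) < N)%N := ltn_ord _.
have hpos : (0 < val (kk w x))%N.
  by rewrite lt0n; move: hk; rewrite -val_eqE.
have e1 : hf w x = G R n (val (kk w x)) by [].
rewrite e1 e2 e3 in S; rewrite e1.
move: hlt hpos S; case: (val (kk w x)) => [|j] // hlt _ S.
have e4 : G R n ((j.+2) %% N)%N = G R n j.+2.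
  have [h|h] := ltnP j.+2 N; first by rewrite modn_small.
  have -> : j.+2 = N by lia.
  by rewrite modnn G0 GN.
rewrite e4 /= in S.
have E := @Grec R n hN5 hodd j hlt.
have -> : \sum_y (adjG x y)%:R * hf w y = \sum_(y | adjG x y) hf w y.
  rewrite [RHS]big_mkcond; apply: eq_bigr => y _.
  by case: (adjG x y); rewrite ?mul1r ?mul0r.
have E2 : \sum_(y | adjG x y) hf w y =
   Ac R n * N%:R * (rh R n ^+ N - 1) - (N%:R - 3) - G R n j.+1 - G R n j - G R n j.+2.
  by rewrite -S; ring.
rewrite E2 -E; ring.
Qed.

End Harm.

Section Series.
Local Open Scope classical_set_scope.
Variables (R : realType) (N0 : nat) (M : 'M[R]_N0) (a h : 'cV[R]_N0) (c : R).
Hypothesis hE : h = a + M *m h.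
Hypothesis hM : forall x y, 0 <= M x y.
Hypothesis hh : forall x, 0 <= h x 0.
Hypothesis hc0 : 0 <= c.
Hypothesis hc1 : c < 1.
Hypothesis hMc : forall x, (M *m h) x 0 <= c * h x 0.

Lemma powS (t : nat) : M ^+ t.+1 = M ^+ t *m M.
Proof. by rewrite exprSr mulmxE. Qed.

Lemma partial (k : nat) : h = \sum_(t < k) (M ^+ t *m a) + M ^+ k *m h.
Proof.
elim: k => [|k IH]; first by rewrite big_ord0 expr0 mul1mx add0r.
by rewrite big_ord_recr /= -addrA powS -mulmxA -mulmxDr -hE.
Qed.

Lemma bound (k : nat) x : 0 <= (M ^+ k *m h) x 0 <= c ^+ k * h x 0.
Proof.
elim: k x => [|k IH] x; first by rewrite expr0 mul1mx mul1r lexx hh.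
have -> : M ^+ k.+1 = M *m M ^+ k by rewrite exprS mulmxE.
rewrite -mulmxA !mxE; apply/andP; split.
  by apply: sumr_ge0 => y _; apply: mulr_ge0 => //; case/andP: (IH y).
apply: (@le_trans _ _ (\sum_y M x y * (c ^+ k * h y 0))).
  apply: ler_sum => y _; apply: ler_wpM2l => //.
  by case/andP: (IH y).
under eq_bigr => y _ do rewrite mulrCA.
rewrite -mulr_sumr exprS -mulrA mulrCA; apply: ler_wpM2l; first exact: exprn_ge0.
by have := hMc x; rewrite mxE.
Qed.

Lemma series_cvg u :
  (fun k => \sum_(t < k) (M ^+ t *m a) u 0) @ \oo --> h u 0.
Proof.
have e : (fun k => \sum_(t < k) (M ^+ t *m a) u 0) =
         (fun k => h u 0 - (M ^+ k *m h) u 0).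
  apply: funext => k; rewrite {1}(partial k) mxE summxE; ring.
rewrite e -[X in _ --> X]subr0; apply: cvgB; first exact: cvg_cst.
apply: (@squeeze_cvgr _ _ _ _ (fun=> 0) (fun k => h u 0 * c ^+ k)).
- by near=> k; rewrite mulrC; exact: bound.
- exact: cvg_cst.
- have := @cvg_geometric R (h u 0) c; rewrite ger0_norm // => /(_ hc1).
  by apply: cvg_trans; apply: near_eq_cvg; near=> k.
Unshelve. all: end_near.
Qed.
End Series.

Section Hit.
Local Open Scope classical_set_scope.
Variable R : realType.
Variable n : nat.
Local Notation N := n.+2.
Hypothesis hN5 : (5 <= N)%N.
Hypothesis hodd : odd N.
Variable s : nat.
Hypothesis hs : ((2 * s) %% N = 1)%N.

Local Notation hfR := (hf R n s).

Definition onesv : 'cV[R]_N := const_mx 1.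
Definition hv (w : 'I_N) : 'cV[R]_N := \col_x hfR w x.

Lemma avoidMl p w (B : 'M[R]_(N, p)) x j :
  (avoid R w *m B) x j = if x != w then B x j else 0.
Proof.
rewrite mxE (bigD1 x) //= big1 ?addr0 => [|y hy]; last first.
  by rewrite mxE eq_sym (negbTE hy) /= mul0r.
by rewrite mxE eqxx /=; case: (x != w); rewrite ?mul1r ?mul0r.
Qed.

Lemma avoidMr p w (B : 'M[R]_(p, N)) x y :
  (B *m avoid R w) x y = if y != w then B x y else 0.
Proof.
rewrite mxE (bigD1 y) //= big1 ?addr0 => [|z hz]; last first.
  by rewrite mxE (negbTE hz) /= mulr0.
by rewrite mxE eqxx /=; case: (y != w); rewrite ?mulr1 ?mulr0.
Qed.

Lemma m3_pos : 0 < N%:R - 3 :> R.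
Proof. have := @m5 R n hN5; lra. Qed.

Lemma transE x y :
  transG R N x y = if adjG x y then (N%:R - 3)^-1 else 0.
Proof. by rewrite mxE deg_eq // natrB //; apply: leq_trans hN5. Qed.

Lemma trans_hv w x : x != w -> (transG R N *m hv w) x 0 = hfR w x - 1.
Proof.
move=> hxw; rewrite mxE.
have -> : \sum_j transG R N x j * hv w j 0 =
   (N%:R - 3)^-1 * \sum_y (adjG x y)%:R * hfR w y.
  rewrite mulr_sumr; apply: eq_bigr => y _; rewrite transE mxE.
  by case: (adjG x y); rewrite ?mul1r ?mul0r ?mulr0 ?mulr1.
rewrite (@harm R n hN5 hodd s hs w x hxw) mulrA mulVf ?mul1r //.
by have := m3_pos; rewrite lt0r => /andP[].
Qed.

Lemma hf_ge0 w x : 0 <= hfR w x.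
Proof. rewrite /hf. exact: (@Gnonneg R n hN5 _ (ltnW (ltn_ord _))). Qed.

Definition Qp (w : 'I_N) : 'M[R]_N := avoid R w *m transG R N *m avoid R w.

Lemma avoid_hv w : avoid R w *m hv w = hv w.
Proof.
apply/matrixP => x j; rewrite (ord1 j) avoidMl.
by case: (eqVneq x w) => //= ->; rewrite mxE hf_w.
Qed.

Lemma hE w : hv w = avoid R w *m onesv + Qp w *m hv w.
Proof.
apply/matrixP => x j; rewrite (ord1 j) /Qp -!mulmxA avoid_hv.
have addE (A B : 'cV[R]_N) : (A + B) x 0 = A x 0 + B x 0 by rewrite mxE.
rewrite addE !avoidMl.
case: (eqVneq x w) => [->|hxw] /=; first by rewrite mxE hf_w addr0.
by rewrite trans_hv // mxE mxE; ring.
Qed.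

Lemma Qp_ge0 w x y : 0 <= Qp w x y.
Proof.
rewrite /Qp avoidMr avoidMl transE.
case: (y != w); case: (x != w); case: (adjG x y) => //.
by rewrite invr_ge0; apply: ltW; exact: m3_pos.
Qed.

Definition Kc (w : 'I_N) : R := 1 + \sum_x hfR w x.

Lemma Kc_ge1 w : 1 <= Kc w.
Proof.
rewrite /Kc lerDl; apply: sumr_ge0 => x _; exact: hf_ge0.
Qed.

Lemma hf_leK w x : hfR w x <= Kc w.
Proof.
rewrite /Kc (bigD1 x) //=.
have : 0 <= \sum_(i | i != x) hfR w i by apply: sumr_ge0 => i _; exact: hf_ge0.
lra.
Qed.

Lemma hMc w x : (Qp w *m hv w) x 0 <= (1 - (Kc w)^-1) * hv w x 0.
Proof.
rewrite /Qp -!mulmxA avoid_hv avoidMl.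
have hK := Kc_ge1 w; have hx := hf_leK w x; have h0 := hf_ge0 w x.
have Kp : 0 < Kc w by lra.
case: (eqVneq x w) => [->|hxw] /=.
  by rewrite mxE hf_w mulr0.
rewrite trans_hv // mxE.
have : hfR w x * (Kc w)^-1 <= 1.
  by rewrite ler_pdivrMr // mul1r.
lra.
Qed.

Lemma c_bounds w : 0 <= 1 - (Kc w)^-1 < 1.
Proof.
have hK := Kc_ge1 w.
have Kp : 0 < Kc w by lra.
have i1 : (Kc w)^-1 <= 1 by rewrite invf_le1.
have i0 : 0 < (Kc w)^-1 by rewrite invr_gt0.
apply/andP; split; lra.
Qed.

Lemma pow_link w t :
  Qp w ^+ t *m avoid R w = avoid R w *m (transG R N *m avoid R w) ^+ t.
Proof.
have aa : avoid R w *m avoid R w = avoid R w.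
  apply/matrixP => x y; rewrite avoidMl.
  by rewrite !mxE; case: (eqVneq x w) => [->|hxw] /=; rewrite ?eqxx ?andbF.
elim: t => [|t IH]; first by rewrite !expr0 mul1mx mulmx1.
have -> : Qp w ^+ t.+1 = Qp w *m Qp w ^+ t by rewrite exprS mulmxE.
have -> : (transG R N *m avoid R w) ^+ t.+1 =
    (transG R N *m avoid R w) *m (transG R N *m avoid R w) ^+ t
  by rewrite exprS mulmxE.
by rewrite -mulmxA IH /Qp !mulmxA -[X in X *m _ = _](mulmxA _ _ (avoid R w)) aa.
Qed.

Lemma surv_eq u w t :
  survival R u w t = (Qp w ^+ t *m (avoid R w *m onesv)) u 0.
Proof.
have oE (A : 'M[R]_N) : (A *m onesv) u 0 = \sum_y A u y.
  by rewrite mxE; apply: eq_bigr => y _; rewrite mxE mulr1.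
by rewrite mulmxA pow_link oE.
Qed.

Lemma hit_cvg u w : series (survival R u w) @ \oo --> hfR w u.
Proof.
have e : series (survival R u w) =
   (fun k => \sum_(t < k) (Qp w ^+ t *m (avoid R w *m onesv)) u 0).
  apply: funext => k; rewrite /series /= big_mkord.
  by apply: eq_bigr => t _; rewrite surv_eq.
rewrite e.
have := c_bounds w => /andP[c0 c1].
have hh : forall x, 0 <= hv w x 0 by move=> x; rewrite mxE; exact: hf_ge0.
have := @series_cvg R N (Qp w) (avoid R w *m onesv) (hv w) _ (hE w) (@Qp_ge0 w)
   hh c0 c1 (@hMc w) u.
by rewrite mxE.
Qed.

End Hit.

Section Eff.
Variable R : realType.
Variable n : nat.
Local Notation N := n.+2.
Hypothesis hN5 : (5 <= N)%N.
Hypothesis hodd : odd N.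
Variable s : nat.
Hypothesis hs : ((2 * s) %% N = 1)%N.

Local Notation hfR := (hf R n s).
Local Notation hvR := (hv R n s).
Local Notation L := (laplacianG R N).

Lemma Lent x y : L x y = (if x == y then N%:R - 3 else 0) - (adjG x y)%:R.
Proof. by rewrite mxE deg_eq // natrB //; apply: leq_trans hN5. Qed.

Lemma Lsym : L^T = L.
Proof. by apply/matrixP => x y; rewrite mxE !Lent eq_sym adj_sym. Qed.

Lemma diag_sum (c : R) (f : 'I_N -> R) x :
  \sum_y (if x == y then c else 0) * f y = c * f x.
Proof.
rewrite (bigD1 x) //= eqxx big1 ?addr0 // => y hy.
by rewrite eq_sym (negbTE hy) mul0r.
Qed.

Lemma L_hv_off w x : x != w -> (L *m hvR w) x 0 = N%:R - 3.
Proof.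
move=> hxw; rewrite mxE.
under eq_bigr => y _ do rewrite Lent mxE mulrBl.
rewrite sumrB diag_sum (@harm R n hN5 hodd s hs w x hxw); ring.
Qed.

Lemma colsum y : \sum_x L x y = 0.
Proof.
under eq_bigr => x _ do rewrite Lent eq_sym (@adj_sym n hN5).
rewrite sumrB.
have -> : \sum_x (if y == x then N%:R - 3 else 0 : R) = N%:R - 3.
  rewrite (bigD1 y) //= eqxx big1 ?addr0 // => x hx.
  by rewrite eq_sym (negbTE hx).
have -> : \sum_x ((adjG y x)%:R : R) = (degG y)%:R.
  rewrite /degG -sum1_card natr_sum [RHS]big_mkcond /=; apply: eq_bigr => x _.
  by rewrite inE; case: (adjG y x).
by rewrite deg_eq // natrB ?subrr //; apply: leq_trans hN5.
Qed.

Lemma L_hv_at w : (L *m hvR w) w 0 = - ((N%:R - 1) * (N%:R - 3)).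
Proof.
have tot : \sum_x (L *m hvR w) x 0 = 0.
  under eq_bigr => x _ do rewrite mxE.
  rewrite exchange_big /=.
  under eq_bigr => y _ do rewrite -mulr_suml colsum mul0r.
  by rewrite big1.
rewrite (bigD1 w) //= in tot.
rewrite (eq_bigr (fun _ => N%:R - 3)) in tot; last by move=> x hx; rewrite L_hv_off.
have t : \sum_(x : 'I_N) (N%:R - 3 : R) = (N%:R - 3) + \sum_(x | x != w) (N%:R - 3).
  by rewrite (bigD1 w).
rewrite sumr_const card_ord -[(N%:R - 3) *+ N]mulr_natr in t.
have e : \sum_(x | x != w) (N%:R - 3 : R) = (N%:R - 3) * N%:R - (N%:R - 3).
  by rewrite t; ring.
rewrite e in tot.
move/eqP: tot; rewrite addr_eq0 => /eqP ->; ring.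
Qed.


Lemma diag_sum' (c : R) (f : 'I_N -> R) x :
  \sum_y (if y == x then c else 0) * f y = c * f x.
Proof. by rewrite -diag_sum; apply: eq_bigr => y _; rewrite eq_sym. Qed.

Lemma hf_sym u v : hfR v u = hfR u v.
Proof.
rewrite /hf.
have -> : kk n s u v = - kk n s v u by rewrite /kk; ring.
case: (eqVneq (kk n s v u) 0) => [->|h]; first by rewrite oppr0.
have hp : (0 < val (kk n s v u))%N by rewrite lt0n; move: h; rewrite -val_eqE.
have hl : (val (kk n s v u) < N)%N := ltn_ord _.
have -> : val (- kk n s v u) = (N - val (kk n s v u))%N.
  have -> : val (- kk n s v u) = ((N - val (kk n s v u)) %% N)%N by [].
  by rewrite modn_small //; lia.
by rewrite (@Gsym R n hodd) //; apply: ltnW.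
Qed.

Lemma eff_eq u v : u != v ->
  eff_resistance R u v = 2 * hfR v u / (N%:R * (N%:R - 3)).
Proof.
move=> huv.
set c : R := N%:R * (N%:R - 3).
have c0 : c != 0.
  have := @m5 R n hN5; rewrite /c => h.
  by rewrite mulf_eq0 negb_or; apply/andP; split; apply/eqP; lra.
set z := hvR v - hvR u.
set b := unitv R u - unitv R v.
have addE (A B : 'cV[R]_N) x : (A - B) x 0 = A x 0 - B x 0 by rewrite !mxE.
have bE x : b 0 x = (if x == u then 1 else 0) - (if x == v then 1 else 0).
  by rewrite !mxE.
have Lz : L *m z = c *: b^T.
  apply/matrixP => x j; rewrite (ord1 j) mulmxBr addE.
  rewrite [RHS]mxE [b^T x 0]mxE bE.
  case: (eqVneq x u) => [->|hxu].
    rewrite (negbTE huv) L_hv_off // L_hv_at /c; ring.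
  case: (eqVneq x v) => [->|hxv].
    rewrite L_hv_at L_hv_off 1?eq_sym // /c; ring.
  by rewrite !L_hv_off // subrr; ring.
set y := c^-1 *: z^T.
have yL : y *m L = b.
  rewrite /y -scalemxAl.
  have -> : z^T *m L = (L *m z)^T by rewrite trmx_mul Lsym.
  by rewrite Lz linearZ /= trmxK scalerA mulVf // scale1r.
have bT : b^T = L *m y^T by rewrite -yL trmx_mul Lsym.
rewrite /eff_resistance -/b bT mulmxA.
have hsub : (b <= L)%MS by rewrite -yL submxMl.
rewrite (mulmxKpV hsub).
rewrite mxE.
have yE x : y 0 x = c^-1 * z x 0 by rewrite /y !mxE.
under eq_bigr => x _ do rewrite bE [y^T x 0]mxE yE mulrBl.
rewrite sumrB !diag_sum' !mul1r /z !addE !mxE !hf_w (hf_sym v u).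
rewrite /c; field.
have h3 : (3 : R) <= n%:R by rewrite (ler_nat R 3 n); lia.
by apply/andP; split; apply/eqP; lra.
Qed.

End Eff.

Theorem corollary4p4 (R : realType) (N : nat) (hN5 : (5 <= N)%N) (hodd : odd N) :
  let Delta : R := Num.sqrt (N%:R * (N%:R - 4)) in
  let rho : R := (N%:R - 2 + Delta) / 2 in
  (forall x : 'I_N, degG x = (N - 3)%N) /\
  #|edgesG N| = ((N * (N - 3)) %/ 2)%N /\
  (forall (u v : 'I_N) (s : nat), ((2 * s) %% N = 1)%N ->
     let q := ((v + N - u) %% N)%N in
     let d := minn ((s * q) %% N) (N - (s * q) %% N) in
     cvgn (series (survival R u v)) /\
     hitting_time R u v = (N * (N - 3))%:R / 2 * eff_resistance R u v /\
     hitting_time R u v =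
       (N * (N - 3))%:R / (Delta * (rho ^+ N + 1)) *
       (rho ^+ N - 1 + (-1) ^+ d * (rho ^+ d - rho ^+ (N - d)))).
Proof.
case: N hN5 hodd => [|[|n]] hN5 hodd //.
move=> Delta rho.
split; first exact: deg_eq.
split; first exact: card_edges.
move=> u v s hs q d.
have hc := @hit_cvg R n hN5 hodd s hs u v.
have Hh : hitting_time R u v = hf R n s v u.
  by rewrite /hitting_time; apply: cvg_lim.
split; first exact: (cvgP _ hc).
split.
  rewrite Hh; case: (eqVneq u v) => [->|huv].
    by rewrite hf_w /eff_resistance subrr !mul0mx mxE mulr0.
  rewrite (@eff_eq R n hN5 hodd s hs u v huv) natrM natrB; last by apply: leq_trans hN5.
  have h3 : (3 : R) <= n%:R by rewrite (ler_nat R 3 n); lia.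
  field; apply/andP; split; apply/eqP; lra.
rewrite Hh /hf.
have hk : val (kk n s v u) = ((s * q) %% n.+2)%N.
  have -> : val (kk n s v u) = ((val (sZ n s : 'I_n.+2) * val ((v - u)%R : 'I_n.+2)) %% n.+2)%N by [].
  by rewrite -valZ /sZ Zp_nat /= modnMml.
rewrite hk.
have -> : G R n ((s * q) %% n.+2) = G R n d.
  rewrite /d; case: leqP => // h.
  rewrite (@Gsym R n hodd) //; apply: ltnW; exact: ltn_pmod.
by [].
Qed.
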